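(* Let the polynomials $A_h(z)$, $h\ge 0$, be defined by $A_0(z)=z$, $A_1(z)=z^2$ and $A_{h+2}(z)=A_{h+1}(z)\bigl(A_{h+1}(z)+2A_h(z)\bigr)$ for all $h\ge 0$. For each $h$, let $\alpha_h$ be the unique positive real solution of $A_h(z)=1/3$. Let $a_n$ be the coefficient of $z^n$ in the formal power series $A(z)=\sum_{h\ge 0}A_h(z)$. Then the limit $\alpha=\lim_{h\to\infty}\alpha_h=0.5219\ldots$ exists, and \[\log_2(a_n)=n\log_2(\alpha^{-1})+\log\theta(n),\qquad n\log_2(\alpha^{-1})=n(0.938\ldots),\] for a function $\theta$ growing at most sub-exponentially, i.e. $\theta(n)=o(\kappa^n)$ for every $\kappa>1$.
   Context: $A_h(z)$ is the generating function of AVL trees of height $h$ (binary trees in which the subtrees of any node differ in height by at most one), with the conventions used by the recursion and initial conditions given; $A(z)$ is the generating function of all AVL trees and $a_n$ its counting sequence. Each $A_h$ is a non-constant polynomial with non-negative coefficients, so $A_h(z)=1/3$ has a unique positive solution. *)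

(* Defs.v *)
From HB Require Import structures.
From mathcomp Require Import all_boot all_order all_algebra.
From mathcomp Require Import all_classical all_reals all_analysis.
Set Implicit Arguments. Unset Strict Implicit. Unset Printing Implicit Defensive.
Import Order.TTheory GRing.Theory Num.Theory.
Local Open Scope ring_scope.

Fixpoint AVLpair (R : nzRingType) (h : nat) : {poly R} * {poly R} :=
  match h with
  | 0%N => ('X, 'X ^+ 2)
  | h'.+1 => let p := AVLpair R h' in (p.2, p.2 * (p.2 + p.1 *+ 2))
  end.

Definition AVLpoly (R : nzRingType) (h : nat) : {poly R} := (AVLpair R h).1.

(* a_n = [z^n] sum_{h>=0} A_h(z), the (finitely supported) sum of the
   n-th coefficients of the A_h, taken as the limit of partial sums. *)
Definition avl_count (R : realType) (n : nat) : R :=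
  limn (fun N : nat => \sum_(h < N) (AVLpoly R h)`_n).

Definition log2 (R : realType) (x : R) : R := ln x / ln 2.

(* Main.v *)
Require Import Defs.
From Stdlib Require Import ZArith.
From HB Require Import structures.
From mathcomp Require Import all_boot all_order all_algebra.
From mathcomp Require Import all_classical all_reals all_analysis.
From mathcomp Require Import ring lra zify.
Import Order.TTheory GRing.Theory Num.Theory.
Import numFieldNormedType.Exports.
Delimit Scope Z_scope with Z.
Set Implicit Arguments. Unset Strict Implicit. Unset Printing Implicit Defensive.
Local Open Scope classical_set_scope.
Local Open Scope ring_scope.
Definition u (R : realType) (x : R) (h : nat) : R := (AVLpoly R h).[x].

Lemma u0 (R : realType) (x : R) : u x 0 = x.
Proof. by rewrite /u /AVLpoly /= hornerX. Qed.

Lemma u1 (R : realType) (x : R) : u x 1 = x ^+ 2.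
Proof. by rewrite /u /AVLpoly /= hornerXn. Qed.

Lemma uSS (R : realType) (x : R) h : u x h.+2 = u x h.+1 * (u x h.+1 + u x h *+ 2).
Proof. by rewrite /u /AVLpoly /= hornerM hornerD hornerMn. Qed.

Lemma u_pos (R : realType) (x : R) h : 0 < x -> 0 < u x h.
Proof.
move=> x0.
suff: 0 < u x h /\ 0 < u x h.+1 by case.
elim: h => [|h [IH1 IH2]]; first by rewrite u0 u1; split=> //; exact: exprn_gt0.
split=> //; rewrite uSS; apply: mulr_gt0 => //; apply: ltr_wpDr => //.
by rewrite mulrn_wge0 // ltW.
Qed.

Lemma u_lt (R : realType) (x y : R) h : 0 < x -> x < y -> u x h < u y h.
Proof.
move=> x0 xy.
have y0 : 0 < y by apply: lt_trans xy.
suff: u x h < u y h /\ u x h.+1 < u y h.+1 by case.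
elim: h => [|h [IH1 IH2]]; first by rewrite !u0 !u1; split=> //; rewrite ltrXn2r // ltW.
split=> //; rewrite !uSS.
have := u_pos h x0; have := u_pos h.+1 x0.
have := u_pos h y0; have := u_pos h.+1 y0.
rewrite !mulr2n; move=> *; nra.
Qed.

Lemma u_le (R : realType) (x y : R) h : 0 < x -> x <= y -> u x h <= u y h.
Proof.
move=> x0; rewrite le_eqVlt => /orP [/eqP -> //|xy].
exact/ltW/u_lt.
Qed.

Lemma u_sq (R : realType) (x : R) h : 0 < x -> u x h ^+ 2 <= u x h.+1.
Proof.
move=> x0; case: h => [|h]; first by rewrite u0 u1.
by rewrite uSS expr2 ler_pM2l ?u_pos // lerDl mulrn_wge0 // ltW // u_pos.
Qed.
Definition Gs (R : realType) (x : R) := exists h, u x h < 3^-1 /\ u x h.+1 < 3^-1.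
Definition Bs (R : realType) (x : R) := exists h, 3^-1 < u x h /\ 3^-1 < u x h.+1.

Lemma G_geom (R : realType) (x c : R) h0 : 0 < x -> u x h0 <= c -> u x h0.+1 <= c ->
  c < 3^-1 -> forall j, u x (h0 + j).+1 <= c * (3 * c) ^+ j /\ u x (h0 + j) <= c.
Proof.
move=> x0 H0 H1 c3; elim=> [|j [IH1 IH2]]; first by rewrite addn0 expr0 mulr1.
have c0 : 0 <= c by apply: le_trans H0; apply/ltW/u_pos.
have rj : 0 <= (3 * c) ^+ j by apply: exprn_ge0; lra.
have rj1 : (3 * c) ^+ j <= 1 by apply: exprn_ile1; lra.
have cr : c * (3 * c) ^+ j <= c by nra.
rewrite addnS; split; last by apply: le_trans IH1 cr.
rewrite uSS exprS.
have v0 := u_pos (h0 + j).+1 x0; have w0 := u_pos (h0 + j) x0.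
have : u x (h0 + j).+1 * (u x (h0 + j).+1 + u x (h0 + j) *+ 2) <= (c * (3 * c) ^+ j) * (3 * c).
  apply: ler_pM => //; first exact: ltW.
  - by rewrite mulr2n; lra.
  - by rewrite mulr2n; lra.
suff -> : c * (3 * c * (3 * c) ^+ j) = c * (3 * c) ^+ j * (3 * c) by [].
ring.
Qed.

Lemma G_tail (R : realType) (x : R) : 0 < x -> Gs x ->
  exists h0 c, [/\ 0 <= c, c < 3^-1 & forall j, u x (h0 + j).+1 <= c * (3 * c) ^+ j /\ u x (h0 + j) <= c].
Proof.
move=> x0 [h0 [H0 H1]].
exists h0, (Num.max (u x h0) (u x h0.+1)).
have c0 : 0 <= Num.max (u x h0) (u x h0.+1) by rewrite le_max ltW // u_pos.
have c3 : Num.max (u x h0) (u x h0.+1) < 3^-1 by rewrite gt_max H0 H1.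
split=> //; apply: G_geom => //; by rewrite le_max lexx ?orbT.
Qed.

Lemma G_lt (R : realType) (x : R) : 0 < x -> Gs x -> exists h0, forall h, (h0 <= h)%N -> u x h < 3^-1.
Proof.
move=> x0 /(G_tail x0) [h0 [c [c0 c3 H]]]; exists h0 => h hh.
have -> : h = (h0 + (h - h0))%N by rewrite subnKC.
by case: (H (h - h0)%N) => _ /le_lt_trans; apply.
Qed.

Lemma B_tail (R : realType) (x : R) h1 : 0 < x -> 3^-1 < u x h1 -> 3^-1 < u x h1.+1 ->
  forall j, 3^-1 < u x (h1 + j).
Proof.
move=> x0 H0 H1.
suff: forall j, 3^-1 < u x (h1 + j) /\ 3^-1 < u x (h1 + j).+1 by move=> H j; case: (H j).
elim=> [|j [IH1 IH2]]; first by rewrite addn0.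
rewrite addnS; split=> //; rewrite uSS mulr2n; nra.
Qed.

Lemma B_gt (R : realType) (x : R) : 0 < x -> Bs x -> exists h0, forall h, (h0 <= h)%N -> 3^-1 < u x h.
Proof.
move=> x0 [h0 [H0 H1]]; exists h0 => h hh.
have -> : h = (h0 + (h - h0))%N by rewrite subnKC.
exact: B_tail.
Qed.

Lemma GB_disj (R : realType) (x : R) : 0 < x -> Gs x -> Bs x -> False.
Proof.
move=> x0 /(G_lt x0) [h0 H0] /(B_gt x0) [h1 H1].
have := H0 (maxn h0 h1) (leq_maxl _ _); have := H1 (maxn h0 h1) (leq_maxr _ _).
lra.
Qed.

Lemma G_down (R : realType) (x y : R) : 0 < x -> x <= y -> Gs y -> Gs x.
Proof.
move=> x0 xy [h [H0 H1]]; exists h; split.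
- by apply: le_lt_trans H0; apply: u_le.
- by apply: le_lt_trans H1; apply: u_le.
Qed.

Lemma B_up (R : realType) (x y : R) : 0 < x -> x <= y -> Bs x -> Bs y.
Proof.
move=> x0 xy [h [H0 H1]]; exists h; split.
- by apply: lt_le_trans H0 _; apply: u_le.
- by apply: lt_le_trans H1 _; apply: u_le.
Qed.

Lemma nG (R : realType) (z : R) h : ~ Gs z -> 3^-1 <= u z h \/ 3^-1 <= u z h.+1.
Proof.
move=> nz; case: (lerP 3^-1 (u z h)) => a; first by left.
case: (lerP 3^-1 (u z h.+1)) => b; first by right.
by case: nz; exists h.
Qed.

Lemma nB (R : realType) (z : R) h : ~ Bs z -> u z h <= 3^-1 \/ u z h.+1 <= 3^-1.
Proof.
move=> nz; case: (lerP (u z h) 3^-1) => a; first by left.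
case: (lerP (u z h.+1) 3^-1) => b; first by right.
by case: nz; exists h.
Qed.

Lemma M_bound (R : realType) (z : R) h : 0 < z -> ~ Bs z -> u z h <= 3/5.
Proof.
move=> z0 nz; have := u_sq h z0; have := u_pos h z0.
case: (nB h nz) => H; first by lra.
rewrite expr2; nra.
Qed.

Lemma M_low1 (R : realType) (z : R) h : 0 < z -> ~ Bs z ->
  3^-1 <= u z h.+2 -> 23/100 <= u z h.+1.
Proof.
move=> z0 nz; rewrite uSS mulr2n => H.
have := M_bound h z0 nz; have := u_pos h z0; have := u_pos h.+1 z0.
nra.
Qed.

Lemma M_low2 (R : realType) (z : R) h : 0 < z -> ~ Gs z -> ~ Bs z ->
  u z h.+3 < 3^-1 -> 3^-1 <= u z h.+2 /\ 26/100 <= u z h.+3.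
Proof.
move=> z0 ng nb H.
have H2 : 3^-1 <= u z h.+2 by case: (nG h.+2 ng) => //; lra.
split=> //; have := M_low1 z0 nb H2.
rewrite uSS mulr2n; have := u_pos h.+1 z0; have := u_pos h.+2 z0; nra.
Qed.

Lemma M_case (R : realType) (z : R) h : 0 < z -> ~ Gs z -> ~ Bs z ->
  (3^-1 <= u z h.+3 /\ 23/100 <= u z h.+2) \/ (3^-1 <= u z h.+2 /\ 26/100 <= u z h.+3).
Proof.
move=> z0 ng nb; case: (lerP 3^-1 (u z h.+3)) => H.
  by left; split=> //; apply: M_low1.
by right; apply: M_low2.
Qed.

Lemma bern (R : realType) j : 1 + j%:R / 4 <= (5 / 4 : R) ^+ j.
Proof.
elim: j => [|j IH]; first by rewrite expr0 mul0r addr0.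
rewrite exprS -natr1.
have : 1 <= (5 / 4 : R) ^+ j by apply: exprn_ege1; lra.
lra.
Qed.

Lemma M_unique (R : realType) (x y : R) : 0 < x -> x < y ->
  ~ Gs x -> ~ Bs x -> ~ Gs y -> ~ Bs y -> False.
Proof.
move=> x0 xy gx bx gy BY.
have y0 : 0 < y by apply: lt_trans xy.
pose d h := u y h - u x h.
pose D h := d h.+1 + 2/5 * d h.
have dpos h : 0 < d h by rewrite /d subr_gt0 u_lt.
have Dstep h : 5/4 * D h.+2 <= D h.+3.
  rewrite /D /d (uSS x h.+2) (uSS y h.+2) !mulr2n.
  have u0 := u_pos h.+2 x0; have u1 := u_pos h.+3 x0.
  have d0 := dpos h.+2; have d1 := dpos h.+3.
  rewrite /d in d0 d1.
  have e1 : 0 <= (2 * u x h.+2 + 2 * u x h.+3 - 17/20) * (u y h.+3 - u x h.+3).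
    by apply: mulr_ge0; [case: (M_case h x0 gx bx); lra | lra].
  have e2 : 0 <= (2 * u x h.+3 - 1/2) * (u y h.+2 - u x h.+2).
    by apply: mulr_ge0; [case: (M_case h x0 gx bx); lra | lra].
  have e3 : 0 <= (u y h.+3 - u x h.+3) * (u y h.+3 - u x h.+3) + 2 * (u y h.+2 - u x h.+2) * (u y h.+3 - u x h.+3).
    by apply: addr_ge0; [apply: mulr_ge0; lra | apply: mulr_ge0; [apply: mulr_ge0|]; lra].
  nra.
have Dgrow j : (5/4) ^+ j * D 2%N <= D j.+2.
  elim: j => [|j IH]; first by rewrite expr0 mul1r.
  rewrite exprS -mulrA; apply: le_trans (Dstep j).
  by apply: ler_wpM2l => //; lra.
have Dbd h : D h <= 21/25.
  rewrite /D /d; have := M_bound h y0 BY; have := M_bound h.+1 y0 BY.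
  have := u_pos h x0; have := u_pos h.+1 x0; lra.
have D2 : 0 < D 2%N by rewrite /D; have := dpos 2%N; have := dpos 3%N; lra.
have hb : 0 <= 4 / D 2%N by apply: divr_ge0 => //; lra.
have := archi_boundP hb; set j := Num.Def.archi_bound _ => hj.
have := Dgrow j; have := Dbd j.+2; have := bern R j.
have : 4 < j%:R * D 2%N by rewrite -ltr_pdivrMr.
move=> *; nra.
Qed.
Definition zR (R : realType) (z : Z) : R := (Z.to_nat z)%:R.
Arguments zR {R}.

Lemma zR_mul (R : realType) (a b : Z) : (0 <= a)%Z -> (0 <= b)%Z -> zR (a * b)%Z = zR a * zR b :> R.
Proof. by move=> a0 b0; rewrite /zR Z2Nat.inj_mul // multE natrM. Qed.

Lemma zR_add (R : realType) (a b : Z) : (0 <= a)%Z -> (0 <= b)%Z -> zR (a + b)%Z = zR a + zR b :> R.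
Proof. by move=> a0 b0; rewrite /zR Z2Nat.inj_add // plusE natrD. Qed.

Lemma zR_lt (R : realType) (a b : Z) : (0 <= a)%Z -> (a < b)%Z -> zR a < zR b :> R.
Proof.
move=> a0 ab; rewrite /zR ltr_nat; apply/ssrnat.ltP; apply Z2Nat.inj_lt => //; lia.
Qed.

Lemma zR_le (R : realType) (a b : Z) : (0 <= a)%Z -> (a <= b)%Z -> zR a <= zR b :> R.
Proof.
move=> a0 ab; rewrite /zR ler_nat; apply/ssrnat.leP; apply Z2Nat.inj_le => //; lia.
Qed.

Lemma zR_ge0 (R : realType) (a : Z) : 0 <= zR a :> R.
Proof. by rewrite /zR. Qed.

Lemma zR_gt0 (R : realType) (a : Z) : (0 < a)%Z -> 0 < zR a :> R.
Proof. by move=> a0; rewrite -[0]/(zR 0%Z); apply: zR_lt. Qed.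

Lemma zR_pow (R : realType) (b : Z) n : (0 <= b)%Z -> zR (b ^ Z.of_nat n)%Z = zR b ^+ n :> R.
Proof.
move=> b0; elim: n => [|n IH]; first by rewrite expr0.
rewrite Nat2Z.inj_succ Z.pow_succ_r; last by lia.
rewrite zR_mul //; last by apply: Z.pow_nonneg.
by rewrite IH exprSr mulrC.
Qed.

Fixpoint orb (p q : Z) (h : nat) : (Z * Z) * (Z * Z) :=
  match h with
  | O => ((p, q), (p * p, q * q))%Z
  | S h' => let '((a, b), (c, d)) := orb p q h' in
            ((c, d), (c * (c * b + a * d * 2), d * d * b))%Z
  end.

Lemma orb_ok (R : realType) (p q : Z) (x : R) : (0 <= p)%Z -> (0 < q)%Z -> x = zR p / zR q ->
  forall h, u x h = zR (orb p q h).1.1 / zR (orb p q h).1.2 /\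
                u x h.+1 = zR (orb p q h).2.1 / zR (orb p q h).2.2 /\
                (0 <= (orb p q h).1.1)%Z /\ (0 < (orb p q h).1.2)%Z /\
                (0 <= (orb p q h).2.1)%Z /\ (0 < (orb p q h).2.2)%Z.
Proof.
move=> p0 q0 ex; elim=> [|h IH].
  rewrite u0 u1 /= !zR_mul ?ex; try lia.
  split; first by [].
  split; first by rewrite expr2 mulf_div.
  nia.
move: IH => /=; case: (orb p q h) => [[a b] [c d]] /= [e1 [e2 [a0 [b0 [c0 d0]]]]].
split=> //; split; last by nia.
rewrite uSS e1 e2 !zR_mul ?zR_add ?zR_mul; try nia.
have b1 : zR b != 0 :> R by rewrite gt_eqF // zR_gt0.
have d1 : zR d != 0 :> R by rewrite gt_eqF // zR_gt0.
rewrite [zR 2%Z]/zR /=.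
have -> : ((Pos.to_nat 2)%:R : R) = 2 by [].
rewrite mulr2n; field.
by rewrite b1 d1.
Qed.
Lemma lt3 (R : realType) (a b : Z) : (0 <= a)%Z -> (0 < b)%Z -> Z.ltb (3 * a) b = true ->
  zR a / zR b < 3^-1 :> R.
Proof.
move=> a0 b0 /Z.ltb_lt h.
have : zR (3 * a)%Z < zR b :> R by apply: zR_lt => //; lia.
rewrite zR_mul; [|lia|lia].
have -> : zR 3%Z = 3 :> R by [].
have bp : 0 < zR b :> R by apply: zR_gt0.
move=> H; rewrite ltr_pdivrMr //; lra.
Qed.

Lemma gt3 (R : realType) (a b : Z) : (0 <= a)%Z -> (0 < b)%Z -> Z.ltb b (3 * a) = true ->
  3^-1 < zR a / zR b :> R.
Proof.
move=> a0 b0 /Z.ltb_lt h.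
have : zR b < zR (3 * a)%Z :> R by apply: zR_lt => //; lia.
rewrite zR_mul; [|lia|lia].
have -> : zR 3%Z = 3 :> R by [].
have bp : 0 < zR b :> R by apply: zR_gt0.
move=> H; rewrite ltr_pdivlMr //; lra.
Qed.

Lemma x0eq (R : realType) : (5219%:R / 10000%:R : R) = zR 5219%Z / zR 10000%Z.
Proof. reflexivity. Qed.

Lemma x1eq (R : realType) : (1631%:R / 3125%:R : R) = zR 1631%Z / zR 3125%Z.
Proof. reflexivity. Qed.

Lemma x0G (R : realType) : Gs (5219%:R / 10000%:R : R).
Proof.
have [e1 [e2 [a0 [b0 [c0 d0]]]]] := @orb_ok R 5219%Z 10000%Z (5219%:R / 10000%:R)
  ltac:(lia) ltac:(lia) (x0eq R) 7.
exists 7%N; rewrite e1 e2; split; apply: lt3; try assumption; vm_compute; reflexivity.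
Qed.

Lemma x1B (R : realType) : Bs (1631%:R / 3125%:R : R).
Proof.
have [e1 [e2 [a0 [b0 [c0 d0]]]]] := @orb_ok R 1631%Z 3125%Z (1631%:R / 3125%:R)
  ltac:(lia) ltac:(lia) (x1eq R) 6.
exists 6%N; rewrite e1 e2; split; apply: gt3; try assumption; vm_compute; reflexivity.
Qed.
Lemma AVL0 (R : realType) : AVLpoly R 0 = 'X.
Proof. by []. Qed.
Lemma AVL1 (R : realType) : AVLpoly R 1 = 'X ^+ 2.
Proof. by []. Qed.
Lemma AVLSS (R : realType) h :
  AVLpoly R h.+2 = AVLpoly R h.+1 * (AVLpoly R h.+1 + AVLpoly R h *+ 2).
Proof. by []. Qed.

Definition nonneg (R : realType) (p : {poly R}) := forall k, 0 <= p`_k.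

Lemma nonneg_mul (R : realType) (p q : {poly R}) : nonneg p -> nonneg q -> nonneg (p * q).
Proof. by move=> hp hq k; rewrite coefM; apply: sumr_ge0 => i _; apply: mulr_ge0. Qed.

Lemma nonneg_add2 (R : realType) (p q : {poly R}) : nonneg p -> nonneg q -> nonneg (p + q *+ 2).
Proof. by move=> hp hq k; rewrite coefD coefMn; apply: addr_ge0 => //; apply: mulrn_wge0. Qed.

Lemma coef_ge0 (R : realType) h : nonneg (AVLpoly R h).
Proof.
suff: nonneg (AVLpoly R h) /\ nonneg (AVLpoly R h.+1) by case.
elim: h => [|h [IH1 IH2]].
  by split=> k; rewrite ?AVL0 ?AVL1 ?coefX ?coefXn.
split=> //; rewrite AVLSS; apply: nonneg_mul => //; exact: nonneg_add2.
Qed.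

Definition vb (R : realType) (p : {poly R}) m := forall k, (k < m)%N -> p`_k = 0.

Lemma vb_mul (R : realType) (p q : {poly R}) m n : vb p m -> vb q n -> vb (p * q) (m + n).
Proof.
move=> hp hq k km; rewrite coefM; apply: big1 => [[j /= hj]] _.
case: (ltnP j m) => jm; first by rewrite hp // mul0r.
by rewrite hq ?mulr0 //; lia.
Qed.

Lemma vanish (R : realType) h k : (k <= h)%N -> (AVLpoly R h)`_k = 0.
Proof.
suff: vb (AVLpoly R h) h.+1 /\ vb (AVLpoly R h.+1) h.+2 by case=> H _; apply: H.
elim: h => [|h [IH1 IH2]].
  by split; rewrite /vb => k' hk; rewrite ?AVL0 ?AVL1 ?coefX ?coefXn; case: k' hk => [|[|k']].
split=> //; rewrite AVLSS.
have : vb (AVLpoly R h.+1 + AVLpoly R h *+ 2) h.+1.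
  move=> k' hk; rewrite coefD coefMn IH1 // IH2 ?mul0rn ?addr0 //; lia.
move=> /(vb_mul IH2) H k' hk; apply: H; lia.
Qed.

Lemma pos_mul (R : realType) (p q : {poly R}) i j : nonneg p -> nonneg q ->
  0 < p`_i -> 0 < q`_j -> 0 < (p * q)`_(i + j).
Proof.
move=> hp hq pi qj; rewrite coefM.
have hi : (i < (i + j).+1)%N by lia.
rewrite (bigD1 (Ordinal hi)) //= addKn.
apply: ltr_wpDr; first by apply: sumr_ge0 => k _; apply: mulr_ge0.
exact: mulr_gt0.
Qed.

Lemma sum_stable (R : realType) n k :
  \sum_(h < n.+1 + k) (AVLpoly R h)`_n = \sum_(h < n.+1) (AVLpoly R h)`_n.
Proof.
elim: k => [|k IH]; first by rewrite addn0.
by rewrite addnS big_ord_recr /= IH vanish ?addr0 //; lia.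
Qed.

Lemma avl_countE (R : realType) n : avl_count R n = \sum_(h < n.+1) (AVLpoly R h)`_n.
Proof.
rewrite /avl_count; apply: lim_near_cst; first exact: Rhausdorff.
exists n.+1 => // N /= HN.
by rewrite -(subnKC HN) sum_stable.
Qed.
Fixpoint mlo (h : nat) : nat :=
  match h with 0 => 1 | S h' => match h' with 0 => 2 | S h'' => mlo h' + mlo h'' end end.

Lemma mlo_bd h : (mlo h <= 2 ^ h)%N /\ (mlo h.+1 <= 2 ^ h + 1)%N /\ (1 <= mlo h)%N /\ (1 <= mlo h.+1)%N.
Proof.
elim: h => [|h [IH1 [IH2 [IH3 IH4]]]]; first by [].
have P1 : (1 <= 2 ^ h)%N by rewrite expn_gt0.
have -> : mlo h.+2 = (mlo h.+1 + mlo h)%N by [].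
rewrite expnS; lia.
Qed.

Lemma supp (R : realType) h n : (mlo h <= n <= 2 ^ h)%N -> 0 < (AVLpoly R h)`_n.
Proof.
suff: (forall n, (mlo h <= n <= 2 ^ h)%N -> 0 < (AVLpoly R h)`_n) /\
      (forall n, (mlo h.+1 <= n <= 2 ^ h.+1)%N -> 0 < (AVLpoly R h.+1)`_n) by case=> H _; apply: H.
elim: h {n} => [|h [IH1 IH2]].
  split=> n /andP [h1 h2]; rewrite ?AVL0 ?AVL1 ?coefX ?coefXn.
  - by have -> : n = 1%N by apply/eqP; rewrite eqn_leq h1 h2.
  - by have -> : n = 2%N by apply/eqP; rewrite eqn_leq h1 h2.
split=> // n /andP [h1 h2]; rewrite AVLSS.
have [b1 [b2 [b3 b4]]] := mlo_bd h.
have P1 : (1 <= 2 ^ h)%N by rewrite expn_gt0.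
have e : mlo h.+2 = (mlo h.+1 + mlo h)%N by [].
rewrite e in h1.
move: h1 h2 IH2; rewrite !expnS => h1 h2 IH2.
have S0 := nonneg_add2 (coef_ge0 R h.+1) (coef_ge0 R h).
have SA j : 0 < (AVLpoly R h.+1)`_j -> 0 < (AVLpoly R h.+1 + AVLpoly R h *+ 2)`_j.
  by move=> H; rewrite coefD coefMn; apply: ltr_wpDr => //; apply: mulrn_wge0; apply: coef_ge0.
have SB j : 0 < (AVLpoly R h)`_j -> 0 < (AVLpoly R h.+1 + AVLpoly R h *+ 2)`_j.
  move=> H; rewrite coefD coefMn; apply: ltr_wpDl; first exact: coef_ge0.
  by rewrite mulr2n; apply: ltr_wpDr => //; apply: ltW.
case: (leqP n (2 * 2 ^ h + 2 ^ h)) => hn.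
  pose i := minn (2 * 2 ^ h) (n - mlo h).
  have -> : n = (i + (n - i))%N by rewrite /i; lia.
  apply: pos_mul => //; first exact: coef_ge0.
    by apply: IH2; apply/andP; split; rewrite /i; lia.
  by apply: SB; apply: IH1; apply/andP; split; rewrite /i; lia.
have -> : n = (2 * 2 ^ h + (n - 2 * 2 ^ h))%N by lia.
apply: pos_mul => //; first exact: coef_ge0.
  by apply: IH2; apply/andP; split; lia.
by apply: SA; apply: IH2; apply/andP; split; lia.
Qed.

Lemma cover n : (0 < n)%N -> exists h, (mlo h <= n <= 2 ^ h)%N.
Proof.
move=> n0.
suff: forall h, (n <= 2 ^ h)%N -> exists h', (mlo h' <= n <= 2 ^ h')%N.
  by apply; apply: ltnW; apply: ltn_expl.
elim=> [|h IH].
  by move=> hn; exists 0%N; rewrite /=; lia.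
move=> hn; case: (leqP n (2 ^ h)) => h2; first exact: IH.
exists h.+1; have [_ [b2 _]] := mlo_bd h; apply/andP; split; lia.
Qed.

Lemma count_pos (R : realType) n : (0 < n)%N -> 0 < avl_count R n.
Proof.
move=> /cover [h hh].
rewrite avl_countE -(sum_stable R n h).
have hi : (h < n.+1 + h)%N by lia.
rewrite (bigD1 (Ordinal hi)) //=.
apply: ltr_wpDr; first by apply: sumr_ge0 => k _; apply: coef_ge0.
exact: supp.
Qed.

Lemma coef_le_horner (R : realType) (p : {poly R}) (x : R) n : nonneg p -> 0 <= x ->
  p`_n * x ^+ n <= p.[x].
Proof.
move=> hp x0; rewrite horner_coef.
have tge0 : forall i : 'I_(size p), 0 <= p`_i * x ^+ i.
  by move=> i; apply: mulr_ge0 => //; apply: exprn_ge0.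
case: (ltnP n (size p)) => hn.
  rewrite (bigD1 (Ordinal hn)) //=; apply: ler_wpDr => //.
  by apply: sumr_ge0 => i _.
by rewrite nth_default // mul0r; apply: sumr_ge0 => i _.
Qed.

Lemma count_le (R : realType) (x : R) n : 0 < x ->
  avl_count R n * x ^+ n <= \sum_(h < n.+1) u x h.
Proof.
move=> x0; rewrite avl_countE mulr_suml; apply: ler_sum => h _.
by apply: coef_le_horner; [apply: coef_ge0 | apply: ltW].
Qed.
Lemma psum_mono (R : realType) (f : nat -> R) N k : (forall h, 0 <= f h) ->
  \sum_(h < N) f h <= \sum_(h < N + k) f h.
Proof.
move=> f0; elim: k => [|k IH]; first by rewrite addn0.
by rewrite addnS big_ord_recr /=; apply: le_trans IH _; rewrite lerDl.
Qed.

Lemma G_sum (R : realType) (x : R) : 0 < x -> Gs x -> exists C, 0 <= C /\ forall N, \sum_(h < N) u x h <= C.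
Proof.
move=> x0 /(G_tail x0) [h0 [c [c0 c3 H]]].
set r := 3 * c.
have r0 : 0 <= r by rewrite /r; lra.
have r1 : 0 < 1 - r by rewrite /r; lra.
set S0 := \sum_(h < h0.+1) u x h.
have S00 : 0 <= S0 by apply: sumr_ge0 => h _; apply/ltW/u_pos.
have key N : \sum_(h < h0.+1 + N) u x h + c * r ^+ N / (1 - r) <= S0 + c / (1 - r).
  elim: N => [|N IH]; first by rewrite addn0 expr0 mulr1.
  rewrite addnS big_ord_recr /=.
  have [HN _] := H N.
  rewrite addSn in HN *.
  have e : c * r ^+ N.+1 / (1 - r) = c * r ^+ N / (1 - r) - c * r ^+ N.
    by rewrite exprS; field; rewrite subr_eq0; apply/eqP => E; move: r1; rewrite -E subrr ltxx.
  rewrite e; lra.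
exists (S0 + c / (1 - r)); split.
  by apply: addr_ge0 => //; apply: divr_ge0 => //; apply: ltW.
move=> N; apply: le_trans (psum_mono N h0.+1 (fun h => ltW (u_pos h x0))) _.
rewrite addnC; apply: le_trans (key N).
rewrite lerDl; apply: divr_ge0; last exact: ltW.
by apply: mulr_ge0 => //; apply: exprn_ge0.
Qed.
Lemma pow_le (R : realType) (a b c : Z) (m n k : nat) : (0 <= a)%Z -> (0 <= b)%Z -> (0 <= c)%Z ->
  Z.leb (a ^ Z.of_nat m * b ^ Z.of_nat n) (c ^ Z.of_nat k) = true ->
  zR a ^+ m * zR b ^+ n <= zR c ^+ k :> R.
Proof.
move=> a0 b0 c0 /Z.leb_le h.
have am := Z.pow_nonneg a (Z.of_nat m) a0; have bn := Z.pow_nonneg b (Z.of_nat n) b0.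
rewrite -!zR_pow // -zR_mul //; apply: zR_le => //; lia.
Qed.

Lemma pow_lt (R : realType) (a b c : Z) (m n k : nat) : (0 <= a)%Z -> (0 <= b)%Z -> (0 <= c)%Z ->
  Z.ltb (c ^ Z.of_nat k) (a ^ Z.of_nat m * b ^ Z.of_nat n) = true ->
  zR c ^+ k < zR a ^+ m * zR b ^+ n :> R.
Proof.
move=> a0 b0 c0 /Z.ltb_lt h.
have am := Z.pow_nonneg a (Z.of_nat m) a0; have bn := Z.pow_nonneg b (Z.of_nat n) b0.
have ck := Z.pow_nonneg c (Z.of_nat k) c0.
rewrite -!zR_pow // -zR_mul //; apply: zR_lt => //.
Qed.

Lemma log_lo (R : realType) (a : R) : 0 < a -> a <= 1631%:R / 3125%:R -> 938 / 1000 <= log2 a^-1.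
Proof.
move=> a0 ax.
have l2 : 0 < ln (2 : R) by apply: ln_gt0; lra.
have t0 : (0 : R) < 2 by lra.
set y := (1631%:R / 3125%:R : R)^-1.
have ey : y = 3125%:R / 1631%:R by rewrite /y invf_div.
have y0 : 0 < y by rewrite ey; lra.
have H := @pow_le R 2 1631 3125 106 113 113 ltac:(compute; discriminate) ltac:(compute; discriminate) ltac:(compute; discriminate) ltac:(vm_compute; reflexivity).
have e1 : zR 2%Z = 2 :> R by []. have e2 : zR 1631%Z = 1631%:R :> R by [].
have e3 : zR 3125%Z = 3125%:R :> R by [].
rewrite e1 e2 e3 in H.
have Hy : (2 : R) ^+ 106 <= y ^+ 113.
  rewrite ey expr_div_n ler_pdivlMr; first exact: H.
  by apply: exprn_gt0; rewrite ltr0n.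
have p2 : (0 : R) < 2 ^+ 106 := exprn_gt0 _ t0.
have py : 0 < y ^+ 113 := exprn_gt0 _ y0.
have Hl : ln ((2 : R) ^+ 106) <= ln (y ^+ 113) by rewrite ler_ln ?posrE.
rewrite (lnXn 106 t0) (lnXn 113 y0) -(mulr_natl (ln (2:R)) 106) -(mulr_natl (ln y) 113) in Hl.
clear p2 py.
clear H Hy.
clear e1 e2 e3.
have x0 : (0 : R) < 1631%:R / 3125%:R by lra.
have ai : 0 < a^-1 by rewrite invr_gt0.
have : ln y <= ln a^-1.
  by rewrite ler_ln ?posrE // /y lef_pV2 ?posrE.
move=> Hya; rewrite /log2 ler_pdivlMr //; lra.
Qed.

Lemma log_hi (R : realType) (a : R) : 5219%:R / 10000%:R <= a -> log2 a^-1 < 939 / 1000.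
Proof.
move=> ax.
have a0 : 0 < a by lra.
have l2 : 0 < ln (2 : R) by apply: ln_gt0; lra.
have t0 : (0 : R) < 2 by lra.
set y := (5219%:R / 10000%:R : R)^-1.
have ey : y = 10000%:R / 5219%:R by rewrite /y invf_div.
have y0 : 0 < y by rewrite ey; lra.
have H := @pow_lt R 2 5219 10000 61 65 65 ltac:(compute; discriminate) ltac:(compute; discriminate) ltac:(compute; discriminate) ltac:(vm_compute; reflexivity).
have e1 : zR 2%Z = 2 :> R by []. have e2 : zR 5219%Z = 5219%:R :> R by [].
have e3 : zR 10000%Z = 10000%:R :> R by [].
rewrite e1 e2 e3 in H.
have Hy : y ^+ 65 < (2 : R) ^+ 61.
  rewrite ey expr_div_n ltr_pdivrMr; first exact: H.
  by apply: exprn_gt0; rewrite ltr0n.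
have p2 : (0 : R) < 2 ^+ 61 := exprn_gt0 _ t0.
have py : 0 < y ^+ 65 := exprn_gt0 _ y0.
have Hl : ln (y ^+ 65) < ln ((2 : R) ^+ 61) by rewrite ltr_ln ?posrE.
rewrite (lnXn 61 t0) (lnXn 65 y0) -(mulr_natl (ln (2:R)) 61) -(mulr_natl (ln y) 65) in Hl.
clear p2 py.
clear H Hy.
clear e1 e2 e3.
have x0 : (0 : R) < 5219%:R / 10000%:R by lra.
have ai : 0 < a^-1 by rewrite invr_gt0.
have : ln a^-1 <= ln y.
  by rewrite ler_ln ?posrE // /y lef_pV2 ?posrE.
move=> Hya; rewrite /log2 ltr_pdivrMr //; lra.
Qed.
Unset Implicit Arguments.
Theorem theorem2 (R : realType) (alpha_ : nat -> R) :
  (forall h : nat, 0 < alpha_ h /\ (AVLpoly R h).[alpha_ h] = 3^-1) ->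
  exists alpha : R,
    [/\ alpha_ @ \oo --> alpha,
        5219 / 10000 <= alpha < 5220 / 10000,
        938 / 1000 <= log2 alpha^-1 < 939 / 1000 &
        exists theta : nat -> R,
          [/\ (forall n : nat, 0 < theta n),
              (forall n : nat, (0 < n)%N ->
                 log2 (avl_count R n) = n%:R * log2 alpha^-1 + log2 (theta n)) &
              (forall kappa : R, 1 < kappa ->
                 (fun n : nat => theta n / kappa ^+ n) @ \oo --> 0)]].
Proof.
move=> Hal.
have Hu h : u (alpha_ h) h = 3^-1 by case: (Hal h).
have Ha0 h : 0 < alpha_ h by case: (Hal h).
pose S := [set x : R | 0 < x /\ Gs x].
have x0S : S (5219%:R / 10000%:R) by split; [lra | exact: x0G].
have ubS : forall g, S g -> g <= 1631%:R / 3125%:R.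
  move=> g [g0 Gg]; rewrite leNgt; apply/negP => lt.
  apply: (GB_disj g0 Gg); apply: (B_up _ (ltW lt) (x1B R)); lra.
have ne : S !=set0 by exists (5219%:R / 10000%:R).
have hsS : has_sup S by split=> //; exists (1631%:R / 3125%:R) => g /ubS.
set al := sup S.
have aS g : S g -> g <= al by move=> Sg; apply: sup_upper_bound.
have x0a : 5219%:R / 10000%:R <= al by apply: aS.
have ax1 : al <= 1631%:R / 3125%:R by apply: ge_sup => // g /ubS.
have a0 : 0 < al by lra.
have Bab : forall y, al < y -> Bs y.
  move=> y ay; have [//|nb] := pselect (Bs y).
  have y0 : 0 < y by lra.
  pose x := (al + y) / 2.
  have ax : al < x by rewrite /x; lra.
  have xy : x < y by rewrite /x; lra.
  have x0 : 0 < x by lra.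
  have ngy : ~ Gs y by move=> Gy; have := aS y (conj y0 Gy); lra.
  have ngx : ~ Gs x by move=> Gx; have := aS x (conj x0 Gx); lra.
  have nbx : ~ Bs x by move=> Bx; apply: nb; apply: B_up Bx => //; apply: ltW.
  by case: (M_unique x0 xy ngx nbx ngy nb).
have alE : sup S = al by [].
clearbody al.
exists al; split.
- apply/cvgrPdist_lt => e e0.
  have [g Sg ge] := sup_adherent e0 hsS.
  rewrite alE in ge.
  case: Sg => g0 Gg.
  have [h0 H0] := G_lt g0 Gg.
  have y0 : 0 < al + e / 2 by lra.
  have [h1 H1] := B_gt y0 (Bab (al + e / 2) ltac:(lra)).
  apply: filterS (nbhs_infty_ge (maxn h0 h1)) => h hh.
  have lo : g < alpha_ h.
    rewrite ltNge; apply/negP => le.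
    have := u_le h (Ha0 h) le; have := H0 h (leq_trans (leq_maxl h0 h1) hh); rewrite Hu; lra.
  have hi : alpha_ h < al + e / 2.
    rewrite ltNge; apply/negP => le.
    have := u_le h y0 le; have := H1 h (leq_trans (leq_maxr h0 h1) hh); rewrite Hu; lra.
  rewrite ltr_norml; apply/andP; split; lra.
- apply/andP; split; lra.
- apply/andP; split; [exact: log_lo | exact: log_hi].
pose theta n := if n == 0%N then 1 else avl_count R n * al ^+ n.
have th0 : theta 0%N = 1 by [].
have thS n : theta n.+1 = avl_count R n.+1 * al ^+ n.+1 by [].
clearbody theta.
exists theta; split.
- move=> [|n]; first by rewrite th0.
  rewrite thS; apply: mulr_gt0; [exact: count_pos | exact: exprn_gt0].
- move=> [|n] // _; rewrite thS.
  have cp : 0 < avl_count R n.+1 by exact: count_pos.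
  have ap : 0 < al ^+ n.+1 by exact: exprn_gt0.
  have l2 : 0 < ln (2 : R) by apply: ln_gt0; lra.
  rewrite /log2 lnM ?posrE // lnXn // lnV ?posrE // -mulr_natl.
  by field; rewrite mulr1 gt_eqF.
move=> k k1.
have k0 : 0 < k by lra.
have e0 : 0 < al - al / k.
  rewrite subr_gt0 ltr_pdivrMr //; nra.
have [g Sg ge] := sup_adherent e0 hsS.
rewrite alE in ge.
have gal := aS g Sg.
case: Sg => g0 Gg.
have [C [C0 HC]] := G_sum g0 Gg.
set rho := al / (k * g).
have kg : 0 < k * g by apply: mulr_gt0.
have rho0 : 0 <= rho by rewrite /rho; apply: divr_ge0; lra.
have rho1 : rho < 1.
  rewrite /rho ltr_pdivrMr // mul1r.
  move: ge; rewrite opprB addrC subrK => ge.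
  by rewrite -ltr_pdivrMl // mulrC.
apply: (@squeeze_cvgr _ _ _ _ (fun=> 0) (geometric (C + 1) rho)).
- apply: nearW => n; apply/andP; split.
    by apply: divr_ge0; [case: n => [|n]; [rewrite th0; lra | rewrite thS; apply: mulr_ge0; [apply: ltW; exact: count_pos | apply: exprn_ge0; lra]] | apply: exprn_ge0; lra].
  rewrite /geometric /=.
  case: n => [|n]; rewrite ?th0 ?thS.
    by rewrite expr0 divr1 expr0 mulr1; lra.
  have := count_le n.+1 g0; have := HC n.+2.
  move=> h1 h2.
  have eq : avl_count R n.+1 * al ^+ n.+1 / k ^+ n.+1 = (avl_count R n.+1 * g ^+ n.+1) * rho ^+ n.+1.
    rewrite /rho expr_div_n exprMn; field.
    by rewrite !expf_neq0 //; apply/negP => /eqP E; lra.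
  rewrite eq; apply: le_trans (ler_wpM2r _ (le_trans h2 h1)) _.
    exact: exprn_ge0.
  apply: ler_wpM2r; [exact: exprn_ge0 | lra].
- exact: cvg_cst.
- by apply: cvg_geometric; rewrite ger0_norm.
Qed.
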